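(* Let $\epsilon>0$, let $\nu$ be a probability distribution over $\{0,1,2,\ldots\}$ (with $\nu_i$ the weight of prior policy $\pi_{k-i}$) with $\mathbb E_{i\sim\nu}[i+1]<\infty$, and set $$\epsilon_{\mathrm{GPI}}=\frac{\epsilon}{\mathbb E_{i\sim\nu}[\,i+1\,]}.$$ Let $\pi_{k+1}$ be the policy produced at update $k$ from prior policies $\pi_k,\pi_{k-1},\ldots$, and assume that at every update the expected one-step TV distance under each state visitation distribution $d^{\pi_{k-i}}$ is bounded by $\epsilon_{\mathrm{GPI}}/2$, i.e. $\mathbb E_{s\sim d^{\pi_{k-i}}}[\mathrm{TV}(\pi_{k-j+1},\pi_{k-j})(s)]\le\epsilon_{\mathrm{GPI}}/2$ for all $0\le j\le i$ with $\nu_i>0$. Then the magnitude of the generalized penalty term evaluated at $\pi=\pi_{k+1}$, $$\frac{2\gamma C^{\pi,\pi_k}}{(1-\gamma)^2}\,\mathbb E_{i\sim\nu}\!\left[\mathbb E_{s\sim d^{\pi_{k-i}}}\big[\mathrm{TV}(\pi,\pi_{k-i})(s)\big]\right],$$ is no greater than the magnitude of the on-policy penalty term $\frac{2\gamma C^{\pi,\pi_k}}{(1-\gamma)^2}\mathbb E_{s\sim d^{\pi_k}}[\mathrm{TV}(\pi,\pi_k)(s)]$ under the on-policy update (i.e. under the constraint $\mathbb E_{s\sim d^{\pi_k}}[\mathrm{TV}(\pi,\pi_k)(s)]\le\epsilon/2$); equivalently, $\mathbb E_{i\sim\nu}[\mathbb E_{s\sim d^{\pi_{k-i}}}[\ma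thrm{TV}(\pi_{k+1},\pi_{k-i})(s)]]\le\epsilon/2$.
   Context: We work with an infinite-horizon discounted Markov decision process with state space $\mathcal S$, action space $\mathcal A$, transition kernel $p$, reward $r$, initial state distribution $\rho_0$, and discount $\gamma\in[0,1)$. A policy $\pi$ maps each state $s$ to a distribution $\pi(\cdot\mid s)$ over actions; $\pi_0,\pi_1,\ldots$ is the sequence of policies produced by successive updates. The normalized discounted state visitation distribution of $\pi$ is $d^{\pi}(s)=(1-\gamma)\sum_{t=0}^\infty\gamma^t\,\mathbb P(s_t=s\mid\rho_0,\pi,p)$. $A^{\pi}=Q^{\pi}-V^{\pi}$ is the advantage function of $\pi$, and $C^{\pi,\pi_k}=\max_{s\in\mathcal S}|\mathbb E_{a\sim\pi(\cdot\mid s)}[A^{\pi_k}(s,a)]|$. $\mathrm{TV}(\pi,\pi')(s)$ is the total variation distance between $\pi(\cdot\mid s)$ and $\pi'(\cdot\mid s)$. *)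

(* Defs.v *)
From HB Require Import structures.
From mathcomp Require Import all_boot all_order all_algebra.
From mathcomp Require Import all_classical all_reals all_analysis.
Set Implicit Arguments. Unset Strict Implicit. Unset Printing Implicit Defensive.
Import Order.TTheory GRing.Theory Num.Theory.
Import numFieldNormedType.Exports.
Local Open Scope ring_scope.

Section MDP.
Variables (R : realType) (S A : finType).

Definition infsum (u : nat -> R) : R := limn (series u).

Definition is_dist (T : finType) (mu : T -> R) : Prop :=
  (forall x, 0 <= mu x) /\ \sum_(x : T) mu x = 1.

(* a policy: pi s a = pi(a | s) *)
Definition policy := S -> A -> R.
Definition is_policy (pi : policy) : Prop := forall s, is_dist (pi s).

(* transition trans_kernel: p s a s' = P(s' | s, a) *)
Definition trans_kernel := S -> A -> S -> R.
Definition is_kernel (p : trans_kernel) : Prop := forall s a, is_dist (p s a).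

Definition mdp_step (p : trans_kernel) (pi : policy) (mu : S -> R) : S -> R :=
  fun s' => \sum_(s : S) \sum_(a : A) mu s * pi s a * p s a s'.

Definition state_dist (p : trans_kernel) (pi : policy) (mu : S -> R) (t : nat) : S -> R :=
  iter t (mdp_step p pi) mu.

Definition visitation (p : trans_kernel) (rho0 : S -> R) (gamma : R) (pi : policy)
    (s : S) : R :=
  (1 - gamma) * infsum (fun t => gamma ^+ t * state_dist p pi rho0 t s).

Definition point_dist (s : S) : S -> R := fun s' => (s' == s)%:R.

Definition Vfun (p : trans_kernel) (r : S -> A -> R) (gamma : R) (pi : policy)
    (s : S) : R :=
  infsum (fun t => gamma ^+ t *
    \sum_(s' : S) \sum_(a : A) state_dist p pi (point_dist s) t s' * pi s' a * r s' a).

Definition Qfun (p : trans_kernel) (r : S -> A -> R) (gamma : R) (pi : policy)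
    (s : S) (a : A) : R :=
  r s a + gamma * \sum_(s' : S) p s a s' * Vfun p r gamma pi s'.

Definition Adv (p : trans_kernel) (r : S -> A -> R) (gamma : R) (pi : policy)
    (s : S) (a : A) : R :=
  Qfun p r gamma pi s a - Vfun p r gamma pi s.

Definition Cconst (p : trans_kernel) (r : S -> A -> R) (gamma : R) (pi pik : policy) : R :=
  \big[Num.max/0]_(s : S) `| \sum_(a : A) pi s a * Adv p r gamma pik s a |.

Definition TV (pi pi' : policy) (s : S) : R :=
  2^-1 * \sum_(a : A) `| pi s a - pi' s a |.

Definition expTV (p : trans_kernel) (rho0 : S -> R) (gamma : R) (mu pi pi' : policy) : R :=
  \sum_(s : S) visitation p rho0 gamma mu s * TV pi pi' s.

End MDP.

(* Main.v *)
Require Import Defs.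
From HB Require Import structures.
From mathcomp Require Import all_boot all_order all_algebra.
From mathcomp Require Import all_classical all_reals all_analysis.
Import Order.TTheory GRing.Theory Num.Theory.
Import numFieldNormedType.Exports.
Local Open Scope ring_scope.


Lemma limn_ge0 (R : realType) (u : R^nat) : cvgn u -> (forall n, 0 <= u n) -> 0 <= limn u.
Proof. move=> cu h. apply: limr_ge => //. exact: nearW. Qed.
Lemma limn_le (R : realType) (u v : R^nat) : cvgn u -> cvgn v -> (forall n, u n <= v n) -> limn u <= limn v.
Proof. move=> cu cv h. apply: ler_lim => //. exact: nearW. Qed.
Lemma limn_Mr (R : realType) (u : R^nat) c : cvgn u -> limn (fun n => u n * c) = limn u * c.
Proof. move=> cu. rewrite limM //. by rewrite lim_cst. exact: is_cvg_cst. Qed.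

Section L.
Variables (R : realType) (S A : finType).

Lemma state_dist_ok (p : trans_kernel R S A) (pi : policy R S A) (mu : S -> R) t :
  is_kernel p -> is_policy pi -> is_dist mu -> is_dist (state_dist p pi mu t).
Proof.
move=> hp hpi hmu; elim: t => [|t [IH0 IH1]] //=.
rewrite /state_dist /= -/(state_dist p pi mu t); split.
  move=> s'; rewrite /mdp_step; apply: sumr_ge0 => s _; apply: sumr_ge0 => a _.
  by rewrite !mulr_ge0 //; [apply: (hpi s).1 | apply: (hp s a).1].
rewrite /mdp_step exchange_big /= -IH1; apply: eq_bigr => s _.
rewrite exchange_big /=.
rewrite -[RHS]mulr1 -(hpi s).2 mulr_sumr; apply: eq_bigr => a _.
by rewrite -mulr_sumr (hp s a).2 mulr1.
Qed.

Lemma visitation_ge0 (p : trans_kernel R S A) rho0 gamma pi s :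
  is_kernel p -> is_policy pi -> is_dist rho0 -> 0 <= gamma -> gamma < 1 ->
  0 <= visitation p rho0 gamma pi s.
Proof.
move=> hp hpi hr g0 g1; rewrite /visitation; apply: mulr_ge0; first by rewrite subr_ge0 ltW.
have hd t := @state_dist_ok p pi rho0 t hp hpi hr.
have u0 : forall t, 0 <= gamma ^+ t * state_dist p pi rho0 t s.
  by move=> t; rewrite mulr_ge0 ?exprn_ge0 // (hd t).1.
have ule : forall t, gamma ^+ t * state_dist p pi rho0 t s <= geometric 1 gamma t.
  move=> t; rewrite /geometric /= mul1r ler_piMr ?exprn_ge0 //.
  have := (hd t).2; rewrite (bigD1 s) //= => <-.
  by rewrite lerDl sumr_ge0 // => x _; apply: (hd t).1.
have cv : cvgn (series (fun t => gamma ^+ t * state_dist p pi rho0 t s)).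
  apply: (series_le_cvg u0 _ ule).
    by move=> t; rewrite /geometric /= mul1r exprn_ge0.
  by apply: is_cvg_geometric_series; rewrite ger0_norm.
rewrite /infsum; apply: limn_ge0 cv _ => n; by rewrite /series /= sumr_ge0.
Qed.

Lemma expTV_ge0 (p : trans_kernel R S A) rho0 gamma mu a b :
  is_kernel p -> is_policy mu -> is_dist rho0 -> 0 <= gamma -> gamma < 1 ->
  0 <= expTV p rho0 gamma mu a b.
Proof.
move=> hp hpi hr g0 g1; apply: sumr_ge0 => s _; apply: mulr_ge0.
  exact: visitation_ge0.
by rewrite /TV mulr_ge0 // sumr_ge0.
Qed.

Lemma expTV_tri (p : trans_kernel R S A) rho0 gamma mu a b c :
  is_kernel p -> is_policy mu -> is_dist rho0 -> 0 <= gamma -> gamma < 1 ->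
  expTV p rho0 gamma mu a c <= expTV p rho0 gamma mu a b + expTV p rho0 gamma mu b c.
Proof.
move=> hp hpi hr g0 g1; rewrite /expTV -big_split /=; apply: ler_sum => s _.
rewrite -mulrDr; apply: ler_wpM2l; first exact: visitation_ge0.
rewrite /TV -mulrDr; apply: ler_wpM2l => //.
rewrite -big_split /=; apply: ler_sum => x _; exact: ler_distD.
Qed.
End L.

From mathcomp Require Import zify.
Theorem theorem2 (R : realType) (S A : finType)
  (p : trans_kernel R S A) (r : S -> A -> R) (rho0 : S -> R) (gamma : R)
  (pi : int -> policy R S A) (k : int)
  (nu : nat -> R) (eps : R) :
  is_kernel p -> is_dist rho0 -> 0 <= gamma -> gamma < 1 ->
  (forall n, is_policy (pi n)) ->
  0 < eps ->
  (forall i, 0 <= nu i) ->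
  cvgn (series nu) -> infsum nu = 1 ->
  cvgn (series (fun i => nu i * (i.+1)%:R)) ->
  let epsGPI := eps / infsum (fun i => nu i * (i.+1)%:R) in
  (forall i j : nat, 0 < nu i -> (j <= i)%N ->
     expTV p rho0 gamma (pi (k - i%:Z)) (pi (k - j%:Z + 1)) (pi (k - j%:Z))
       <= epsGPI / 2) ->
  let Epen := infsum (fun i => nu i *
       expTV p rho0 gamma (pi (k - i%:Z)) (pi (k + 1)) (pi (k - i%:Z))) in
  Epen <= eps / 2 /\
  2 * gamma * Cconst p r gamma (pi (k + 1)) (pi k) / (1 - gamma) ^+ 2 * Epen
    <= 2 * gamma * Cconst p r gamma (pi (k + 1)) (pi k) / (1 - gamma) ^+ 2 * (eps / 2).

Proof.
move=> hp hr g0 g1 hpi e0 nu0 cnu snu cw epsGPI hyp Epen.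
set w := (fun i : nat => nu i * (i.+1)%:R).
set L := infsum w.
have wge : forall i, nu i <= w i.
  by move=> i; rewrite /w ler_peMr // ler1n.
have L1 : 1 <= L by rewrite -snu; apply: limn_le => // n; apply: ler_sum.
have L0 : 0 < L by apply: lt_le_trans L1.
set c := epsGPI / 2.
have c0 : 0 <= c by rewrite /c /epsGPI !divr_ge0 // ?ltW.
pose E i := expTV p rho0 gamma (pi (k - i%:Z)) (pi (k + 1)) (pi (k - i%:Z)).
have chain : forall i j, 0 < nu i -> (j <= i)%N ->
   expTV p rho0 gamma (pi (k - i%:Z)) (pi (k + 1)) (pi (k - j%:Z)) <= (j.+1)%:R * c.
  move=> i j ni; elim: j => [|j IH] ji.
    rewrite mul1r; have := hyp i 0%N ni ji; by rewrite subr0.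
  apply: le_trans (@expTV_tri _ _ _ _ _ _ _ _ (pi (k - j%:Z)) _ hp (hpi _) hr g0 g1) _.
  rewrite -nat1r mulrDl mul1r [X in _ <= X]addrC lerD //; first by apply: IH; apply: ltnW.
  have := hyp i j.+1 ni ji.
  by have -> : k - (j.+1)%:Z + 1 = k - j%:Z by lia.
have Ele : forall i, nu i * E i <= w i * c.
  move=> i; have := nu0 i; rewrite le_eqVlt => /orP[/eqP <-|ni].
    by rewrite mul0r mulr_ge0 // /w mulr_ge0.
  by rewrite /w -mulrA ler_wpM2l // chain.
have E0 : forall i, 0 <= nu i * E i.
  by move=> i; rewrite mulr_ge0 // expTV_ge0.
have cE : cvgn (series (fun i => nu i * E i)).
  apply: (series_le_cvg E0 _ Ele).
    by move=> i; rewrite mulr_ge0 // /w mulr_ge0.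
  have -> : series (fun i => w i * c) = (fun n => series w n * c).
    by apply/funext => n; rewrite /series /= mulr_suml.
  exact: is_cvgMl.
have hE : Epen <= eps / 2.
  have -> : eps / 2 = L * c by rewrite /c /epsGPI mulrA mulrCA divff ?gt_eqF // mulr1.
  rewrite /Epen /infsum -limn_Mr //.
  apply: limn_le => //; first exact: is_cvgMl.
  by move=> n; rewrite /series /= mulr_suml; apply: ler_sum => i _; exact: Ele.
split => //.
apply: ler_wpM2l => //.
have g1' : 0 <= 1 - gamma by rewrite subr_ge0 ltW.
have C0 : 0 <= Cconst p r gamma (pi (k + 1)) (pi k) by rewrite /Cconst; exact: bigmax_ge_id.
by rewrite !mulr_ge0 // invr_ge0 exprn_ge0.
Qed.
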